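(* Assume the Standing setup and the Time series setup, suppose that $R(z)$ is analytic on $\mathcal V_\epsilon\cup\mathcal W_\theta$ for some $\epsilon>0$ and $\theta>0$, that $R$ has a pole of order $2$ at $z=1$ (i.e. $T_{-2}\ne0$ and $T_{-k}=0$ for $k\ge3$), and that $x(-1)=c=T_{-2}d$ for some $d\in Y$. Then for every integer $t\ge0$ $$x(t)=T_{-2}\nabla^{-2}g_+(t)-T_{-1}\nabla^{-1}g_+(t)+T_{-2}d+(t+1)T_{-2}C_0T_{-2}d+\sum_{s=0}^tV_s\,g(t-s),$$ where $\nabla^{-1}g_+(t)=\sum_{s=0}^tg(t-s)$ and $\nabla^{-2}g_+(t)=\sum_{s=0}^t(s+1)g(t-s)$. Moreover $T_{-2}(Y)\subseteq T_{-1}(Y)$, and for every $f\in X^*$ with $f(u)=0$ for all $u\in T_{-2}(Y)$ one has $f(x(t))=-f\big(T_{-1}\sum_{s=0}^tg(t-s)\big)+\sum_{s=0}^tf\big(V_sg(t-s)\big)$ for all $t\ge0$.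
   Context: Standing setup. Let $X,Y$ be complex Banach spaces, let $\mathcal B(X,Y)$ denote the bounded linear operators from $X$ to $Y$ ($\mathcal B(X)=\mathcal B(X,X)$), and let $I_X$ be the identity on $X$. Let $A_0,A_1\in\mathcal B(X,Y)$, let $A(z)=A_0+A_1z$ ($z\in\mathbb C$), and set $C_0=A_0+A_1$, $C_1=A_1$, so that $A(z)=C_0+C_1(z-1)$. Let $R(z)=A(z)^{-1}\in\mathcal B(Y,X)$ where this inverse exists. For $\epsilon>0$ let $\mathcal V_\epsilon=\{z\in\mathbb C:|z|<1+\epsilon,\ z\ne1\}$, and for $\theta>0$ let $\mathcal W_\theta=\{z\in\mathbb C:0<|z-1|<1+\theta\}$. If $R$ is analytic on $\mathcal V_\epsilon$ then it has a Laurent expansion $R(z)=\sum_{j\in\mathbb Z}T_j(z-1)^j$ on $0<|z-1|<\epsilon$ with $T_j\in\mathcal B(Y,X)$, and (known facts) $T_{-k}=(-1)^{k-1}(T_{-1}C_0)^{k-1}T_{-1}$ for $k\ge1$, $T_\ell=(-1)^\ell(T_0C_1)^\ell T_0$ for $\ell\ge0$, $\|(T_{-1}C_0)^k\|^{1/k}\to0$, $T_{-1}C_1+T_0C_0=I_X$, $C_1T_{-1}+C_0T_0=I_Y$, $T_{-1}C_iT_0=0$ and $T_0C_iT_{-1}=0$ for $i=0,1$; moreover $P=T_{-1}C_1$ and $P^c=I_X-P=T_0C_0$ are complementary projections on $X$ and $Q=C_1T_{-1}$, $Q^c=I_Y-Q=C_0T_0$ are complementary projections on $Y$. The singular part $R_{\rm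 sin}(z)=\sum_{k\ge1}T_{-k}(z-1)^{-k}$ converges for all $z\ne1$ and the regular part is $R_{\rm reg}(z)=\sum_{\ell\ge0}T_\ell(z-1)^\ell$. Define, for integers $s\ge0$, $U_s=-(I_X-T_{-1}C_0)^{-s-1}T_{-1}$ (these are the Maclaurin coefficients of $R_{\rm sin}$) and, whenever $I_X-T_0C_1$ is invertible, $V_s=(-1)^s(I_X-T_0C_1)^{-s-1}(T_0C_1)^sT_0$. Time series setup. Let $(\Omega,\Sigma,\mu)$ be a probability space and $\{n(t)\}_{t\in\mathbb Z}$ a sequence of i.i.d. $X$-valued (Bochner measurable) random variables with $\mathbb E\|n(t)\|^2<\infty$ and $\mathbb E[n(t)]=0$. Let $F_0,F_1\in\mathcal B(X,Y)$ and $g(t)=F_0n(t)+F_1n(t-1)$ for $t\in\mathbb Z$. The $X$-valued random sequence $\{x(t)\}_{t\ge-1}$ satisfies $x(-1)=c$ and $A_0x(t)+A_1x(t-1)=g(t)$ for every integer $t\ge0$. Let $g_+(t)=g(t)$ for $t\ge0$ and $g_+(t)=0$ for $t<0$. For integers $t\ge0$, $k\ge1$, $\ell\ge0$ write $\nabla^{-k}g_+(t)=\sum_{s=0}^t\binom{s+k-1}{s}g(t-s)$, $\nabla^\ell g_+(t)=\sum_{s=0}^{\min\{\ell,t\}}\binom{\ell}{s}(-1)^sg(t-s)$ and $\nabla^\ell g(t)=\sum_{s=0}^{\ell}\binom{\ell}{s}(-1)^sg(t-s)$. *)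

(* Defs.v *)
From HB Require Import structures.
From mathcomp Require Import all_boot all_order all_algebra.
From mathcomp Require Import complex.
From mathcomp Require Import all_classical all_reals all_analysis.
Set Implicit Arguments. Unset Strict Implicit. Unset Printing Implicit Defensive.
Import Order.TTheory GRing.Theory Num.Theory.
Local Open Scope classical_set_scope.
Local Open Scope ring_scope.
Local Open Scope complex_scope.

Section Operators.
Context {R : realType}.
Local Notation C := R[i].

Definition is_linear_op {U V : normedModType C} (f : U -> V) :=
  forall (a : C) (u v : U), f (a *: u + v) = a *: f u + f v.

Definition bounded_op {U V : normedModType C} (f : U -> V) :=
  is_linear_op f /\ exists M : C, forall u, `|f u| <= M * `|u|.

(* convergence of a sequence of operators in the operator norm:
   || u_N - L || -> 0, written out as uniform convergence on the unit ball *)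
Definition op_cvg {U V : normedModType C} (u : nat -> U -> V) (L : U -> V) :=
  forall e : C, 0 < e -> exists N : nat, forall m : nat, (N <= m)%N ->
    forall v : U, `|u m v - L v| <= e * `|v|.

Definition analytic_on {U V : normedModType C} (D : set C) (F : C -> U -> V) :=
  forall z0, D z0 -> exists r : C, 0 < r /\
    exists a : nat -> U -> V, (forall k, bounded_op (a k)) /\
      forall z, `|z - z0| < r ->
        D z /\ op_cvg (fun N v => \sum_(k < N) (z - z0) ^+ k *: a k v) (F z).

Definition laurent_at1 {U V : normedModType C} (T : int -> U -> V) (F : C -> U -> V)
  (eps : R) :=
  forall z : C, 0 < `|z - 1| < eps%:C ->
    exists Sg Rg : U -> V,
      op_cvg (fun N v => \sum_(k < N) (z - 1) ^- k.+1 *: T (- (k.+1)%:Z)%R v) Sg /\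
      op_cvg (fun N v => \sum_(l < N) (z - 1) ^+ l *: T (l%:Z) v) Rg /\
      forall v, F z v = Sg v + Rg v.

Definition VW (eps theta : R) : set C :=
  [set z | (`|z| < (1 + eps)%:C /\ z != 1) \/ (0 < `|z - 1| < (1 + theta)%:C)].

(* the (two-sided, bounded) inverse of an operator, chosen classically when
   it exists (junk value 0 otherwise) *)
Definition op_inv {U : normedModType C} (f : U -> U) : U -> U :=
  match pselect (exists g : U -> U, bounded_op g /\ cancel f g /\ cancel g f) with
  | left H => projT1 (cid H)
  | right _ => fun _ => 0
  end.

(* V_s = (-1)^s (I - T_0 C_1)^{-s-1} (T_0 C_1)^s T_0, with C_1 = A_1 *)
Definition Vop {U V : normedModType C} (T : int -> V -> U) (A1 : U -> V) (s : nat)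
  : V -> U :=
  fun y => (-1) ^+ s *:
    iter s.+1 (op_inv (fun u => u - T 0%:Z (A1 u)))
      (iter s (fun u => T 0%:Z (A1 u)) (T 0%:Z y)).

Definition nabla_inv {V : normedModType C} (k : nat) (g : int -> V) (t : nat) : V :=
  \sum_(s < t.+1) ('C(s + k - 1, s))%:R *: g (t%:Z - s%:Z)%R.

End Operators.

Section RandomVariables.
Context {R : realType}.
Local Notation C := R[i].
Context {d : measure_display} {Omega : measurableType d}.

Definition borel_sets (V : normedModType C) : set (set V) :=
  <<s [set A : set V | open A] >>.

Definition simple_fun {V : normedModType C} (f : Omega -> V) :=
  finite_set (range f) /\ forall v : V, measurable (f @^-1` [set v]).

Definition bochner_measurable {V : normedModType C} (f : Omega -> V) :=
  exists s : nat -> Omega -> V, (forall k, simple_fun (s k)) /\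
    forall w, (fun k => s k w) @ \oo --> f w.

Definition simple_integral (P : probability Omega R) {V : normedModType C}
  (s : Omega -> V) : V :=
  (\sum_(v \in range s) (fine (P (s @^-1` [set v])))%:C *: v)%R.

Definition bochner_integral_is (P : probability Omega R) {V : normedModType C}
  (f : Omega -> V) (m : V) :=
  exists s : nat -> Omega -> V, (forall k, simple_fun (s k)) /\
    (fun k => (\int[P]_w (complex.Re `|s k w - f w|)%:E)%E) @ \oo --> 0%E /\
    (fun k => simple_integral P (s k)) @ \oo --> m.

Definition finite_second_moment (P : probability Omega R) {V : normedModType C}
  (f : Omega -> V) :=
  (\int[P]_w ((complex.Re `|f w|) ^+ 2)%:E < +oo)%E.

Definition iid_seq (P : probability Omega R) {V : normedModType C}
  (n : int -> Omega -> V) :=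
  (forall (J : seq int) (B : int -> set V), uniq J ->
     (forall j, borel_sets (B j)) ->
     fine (P (\bigcap_(j in [set` J]) (n j @^-1` B j))) =
     (\prod_(j <- J) fine (P (n j @^-1` B j)))%R) /\
  (forall (s t : int) (B : set V), borel_sets B ->
     P (n s @^-1` B) = P (n t @^-1` B)).

End RandomVariables.

Definition gseq {R : realType} {Omega : Type} {X Y : normedModType R[i]}
  (F0 F1 : X -> Y) (n : int -> Omega -> X) (t : int) (w : Omega) : Y :=
  (F0 (n t w) + F1 (n (t - 1)%R w))%R.

(* Main.v *)
Require Import Defs.
From HB Require Import structures.
From mathcomp Require Import all_boot all_order all_algebra.
From mathcomp Require Import complex.
From mathcomp Require Import all_classical all_reals all_analysis.
From mathcomp Require Import ring lra.
Import Order.TTheory GRing.Theory Num.Theory.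
Import numFieldNormedType.Exports.
Local Open Scope classical_set_scope.
Local Open Scope ring_scope.
Local Open Scope complex_scope.

Section NM.
Context {R : realType}.
Local Notation C := R[i].

Definition nm {V : normedModType C} (v : V) : R := complex.Re `|v|.

Lemma nmE {V : normedModType C} (v : V) : `|v| = (nm v)%:C.
Proof. by rewrite /nm RRe_real // normr_real. Qed.

Lemma nm_ge0 {V : normedModType C} (v : V) : 0 <= nm v.
Proof. by rewrite -ler0c -nmE. Qed.

Lemma nmD {V : normedModType C} (u v : V) : nm (u + v) <= nm u + nm v.
Proof. by rewrite -lecR rmorphD /= -!nmE ler_normD. Qed.

Definition nc (a : C) : R := complex.Re `|a|.
Lemma ncE (a : C) : `|a| = (nc a)%:C.
Proof. by rewrite /nc RRe_real // normr_real. Qed.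
Lemma nc_ge0 (a : C) : 0 <= nc a.
Proof. by rewrite -ler0c -ncE. Qed.

Lemma nmZ {V : normedModType C} (a : C) (v : V) : nm (a *: v) = nc a * nm v.
Proof. by apply: complexI; rewrite rmorphM /= -ncE -!nmE normrZ. Qed.

Lemma nmN {V : normedModType C} (v : V) : nm (- v) = nm v.
Proof. by rewrite /nm normrN. Qed.

Lemma nmB {V : normedModType C} (u v : V) : nm (u - v) = nm (v - u).
Proof. by rewrite /nm distrC. Qed.

Lemma nm0 {V : normedModType C} : nm (0 : V) = 0.
Proof. by rewrite /nm normr0. Qed.

Lemma nm_eq0 {V : normedModType C} (v : V) : nm v = 0 -> v = 0.
Proof. move=> h; apply/eqP; rewrite -normr_eq0 nmE h. by []. Qed.

Lemma ncX (h : C) k : nc (h ^+ k) = nc h ^+ k.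
Proof. by apply: complexI; rewrite rmorphXn /= -!ncE normrX. Qed.

Lemma ncM (h g : C) : nc (h * g) = nc h * nc g.
Proof. by apply: complexI; rewrite rmorphM /= -!ncE normrM. Qed.

Lemma ncR (r : R) : nc (r%:C) = `|r|.
Proof. rewrite /nc normc_def /= expr0n /= addr0 sqrtr_sqr //. Qed.

Lemma le_eps (a b : R) : (forall e, 0 < e -> a <= b + e) -> a <= b.
Proof.
move=> H; case: (lerP a b) => // hab.
have := H ((a - b) / 2) ltac:(lra). lra.
Qed.

Lemma leC_Re {x y : C} : x <= y -> complex.Re x <= complex.Re y.
Proof. by rewrite lecE => /andP[]. Qed.

Lemma zero_lemma (a K d : R) : 0 < d -> 0 <= a ->
  (forall r, 0 < r -> r < d -> a <= K * r) -> a = 0.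
Proof.
move=> d0 a0 H; case: (eqVneq a 0) => // an0.
have ap : 0 < a by rewrite lt_neqAle eq_sym an0.
case: (lerP K 0) => hK.
  have := H (d / 2) ltac:(lra) ltac:(lra). nra.
case: (lerP (d / 2) (a / (2 * K))) => hc.
  have := H (d / 2) ltac:(lra) ltac:(lra).
  have : K * (d / 2) <= K * (a / (2 * K)) by rewrite ler_pM2l.
  have -> : K * (a / (2 * K)) = a / 2 by field; lra.
  lra.
have hp : 0 < a / (2 * K) by apply: divr_gt0 => //; lra.
have := H (a / (2 * K)) hp ltac:(lra).
have -> : K * (a / (2 * K)) = a / 2 by field; lra.
lra.
Qed.

Lemma geom_le2 (q : R) N : 0 <= q -> q <= 1 / 2 -> \sum_(i < N) q ^+ i <= 2.
Proof.
move=> q0 q1.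
suff : \sum_(i < N) q ^+ i + 2 * q ^+ N <= 2.
  have : 0 <= q ^+ N by apply: exprn_ge0. lra.
elim: N => [|N IH]; first by rewrite big_ord0 expr0; lra.
rewrite big_ord_recr /= exprSr.
have : 0 <= q ^+ N by apply: exprn_ge0.
nra.
Qed.

Section Lin.
Context {U V : normedModType C} {f : U -> V} (hf : is_linear_op f).
Lemma lin0 : f 0 = 0.
Proof. have := hf 1 0 0; rewrite !scale1r !addr0 => h. by apply: (addrI (f 0)); rewrite -h addr0. Qed.
Lemma linD u v : f (u + v) = f u + f v.
Proof. by have := hf 1 u v; rewrite !scale1r. Qed.
Lemma linZ a u : f (a *: u) = a *: f u.
Proof. by have := hf a u 0; rewrite !addr0 lin0 addr0. Qed.
Lemma linN u : f (- u) = - f u.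
Proof. by rewrite -scaleN1r linZ scaleN1r. Qed.
Lemma linB u v : f (u - v) = f u - f v.
Proof. by rewrite linD linN. Qed.
Lemma lin_sum I (r : seq I) (P : pred I) (F : I -> U) :
  f (\sum_(i <- r | P i) F i) = \sum_(i <- r | P i) f (F i).
Proof. exact: (big_morph f linD lin0). Qed.
End Lin.

Lemma nm_sum {V : normedModType C} I (r : seq I) (P : pred I) (F : I -> V) :
  nm (\sum_(i <- r | P i) F i) <= \sum_(i <- r | P i) nm (F i).
Proof.
elim/big_rec2: _; first by rewrite nm0.
move=> i y1 y2 _ h; apply: le_trans (nmD _ _) _; lra.
Qed.

Lemma Re_mulR (M : C) (r : R) : complex.Re (M * r%:C) = complex.Re M * r.
Proof. by case: M => a b /=; rewrite mulr0 subr0. Qed.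

Lemma bnd_nm {U V : normedModType C} {f : U -> V} : bounded_op f ->
  exists M : R, 0 <= M /\ forall u, nm (f u) <= M * nm u.
Proof.
case=> _ [M HM]; exists `|complex.Re M|; split => // u.
have := leC_Re (HM u); rewrite [`|u|]nmE Re_mulR => h.
apply: le_trans h _; apply: ler_wpM2r; [exact: nm_ge0 | exact: ler_norm].
Qed.

Lemma nm_bnd {U V : normedModType C} (f : U -> V) : is_linear_op f ->
  (exists M : R, forall u, nm (f u) <= M * nm u) -> bounded_op f.
Proof.
move=> hl [M HM]; split => //; exists M%:C => u.
by rewrite !nmE -rmorphM lecR.
Qed.

Lemma bounded_comp {U V W : normedModType C} {f : V -> W} {g : U -> V} :
  bounded_op f -> bounded_op g -> bounded_op (fun u => f (g u)).
Proof.
move=> bf bg; apply: nm_bnd.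
  by move=> a u v; rewrite (linD bg.1) (linZ bg.1) (linD bf.1) (linZ bf.1).
have [Mf [Mf0 Hf]] := bnd_nm bf; have [Mg [Mg0 Hg]] := bnd_nm bg.
exists (Mf * Mg) => u; apply: le_trans (Hf _) _; rewrite -mulrA.
by apply: ler_wpM2l.
Qed.

Lemma bounded_add {U V : normedModType C} {f g : U -> V} :
  bounded_op f -> bounded_op g -> bounded_op (fun u => f u + g u).
Proof.
move=> bf bg; apply: nm_bnd.
  move=> a u v; rewrite (linD bg.1) (linZ bg.1) (linD bf.1) (linZ bf.1).
  by rewrite scalerDr; rewrite addrACA.
have [Mf [Mf0 Hf]] := bnd_nm bf; have [Mg [Mg0 Hg]] := bnd_nm bg.
exists (Mf + Mg) => u; apply: le_trans (nmD _ _) _; rewrite mulrDl.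
by apply: lerD.
Qed.

Section Approx.
Context {V : normedModType C}.

Definition approx (F : C -> V) (c : nat -> V) (n : nat) :=
  exists d K : R, 0 < d /\ forall h : C, 0 < nc h -> nc h < d ->
    nm (F h - \sum_(l < n) h ^+ l *: c l) <= K * nc h ^+ n.

Lemma approx_ext {F G c c' n} : approx F c n ->
  (exists d0 : R, 0 < d0 /\ forall h, 0 < nc h -> nc h < d0 -> F h = G h) ->
  (forall l, (l < n)%N -> c l = c' l) -> approx G c' n.
Proof.
move=> [d [K [d0 H]]] [d1 [d10 HFG]] hc.
exists (Order.min d d1), K; split; first by rewrite lt_min d0 d10.
move=> h h0; rewrite lt_min => /andP[h1 h2].
rewrite -HFG //; apply: le_trans (H h h0 h1).
rewrite le_eqVlt; apply/orP; left; apply/eqP; congr (nm (_ - _)).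
by apply: eq_bigr => l _; rewrite hc.
Qed.

Lemma approx_add {F G c c' n} : approx F c n -> approx G c' n ->
  approx (fun h => F h + G h) (fun l => c l + c' l) n.
Proof.
move=> [d [K [d0 H]]] [d1 [K1 [d10 H1]]].
exists (Order.min d d1), (K + K1); split; first by rewrite lt_min d0 d10.
move=> h h0; rewrite lt_min => /andP[h1 h2].
have -> : F h + G h - \sum_(l < n) h ^+ l *: (c l + c' l) =
  (F h - \sum_(l < n) h ^+ l *: c l) + (G h - \sum_(l < n) h ^+ l *: c' l).
  rewrite (eq_bigr (fun l : 'I_n => h ^+ l *: c l + h ^+ l *: c' l)); last first.
    by move=> l _; rewrite scalerDr.
  rewrite big_split /=; rewrite opprD addrACA. by [].
apply: le_trans (nmD _ _) _; rewrite mulrDl; apply: lerD; [exact: H | exact: H1].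
Qed.
End Approx.

Lemma approx_lin {V W : normedModType C} {f : V -> W} {F c n} :
  bounded_op f -> approx F c n -> approx (fun h => f (F h)) (fun l => f (c l)) n.
Proof.
move=> bf [d [K [d0 H]]]; have [M [M0 HM]] := bnd_nm bf.
exists d, (M * K); split => // h h0 h1.
have -> : f (F h) - \sum_(l < n) h ^+ l *: f (c l) = f (F h - \sum_(l < n) h ^+ l *: c l).
  rewrite (linB bf.1) (lin_sum bf.1); congr (_ - _); apply: eq_bigr => l _.
  by rewrite (linZ bf.1).
apply: le_trans (HM _) _; rewrite -mulrA; apply: ler_wpM2l => //; exact: H.
Qed.

Lemma approx_shift {V : normedModType C} {F : C -> V} {c n} : approx F c n ->
  approx (fun h => h *: F h) (fun l => if l is l'.+1 then c l' else 0) n.+1.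
Proof.
move=> [d [K [d0 H]]]; exists d, K; split => // h h0 h1.
rewrite big_ord_recl /= scaler0 add0r.
have -> : \sum_(i < n) h ^+ (bump 0 i) *: c i = h *: \sum_(l < n) h ^+ l *: c l.
  rewrite scaler_sumr; apply: eq_bigr => l _; rewrite scalerA -exprS. by [].
rewrite -scalerBr nmZ exprS mulrCA; apply: ler_wpM2l; first exact: nc_ge0.
exact: H.
Qed.

Lemma approx_const {V : normedModType C} (v : V) n :
  approx (fun _ => v) (fun l => if l == 0%N then v else 0) n.
Proof.
case: n => [|n].
  exists 1, (nm v); split => // h _ _; rewrite big_ord0 subr0 expr0 mulr1. by [].
exists 1, 0; split => // h _ _; rewrite big_ord_recl /= expr0 scale1r big1 ?addr0.
  by rewrite subrr nm0 mul0r.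
by move=> i _; rewrite scaler0.
Qed.

Lemma approx_trunc {V : normedModType C} {F : C -> V} {c n} :
  approx F c n.+1 -> approx F c n.
Proof.
move=> [d [K [d0 H]]]; exists (Order.min d 1), (`|K| + nm (c n)); split.
  by rewrite lt_min d0 ltr01.
move=> h h0; rewrite lt_min => /andP[h1 h2].
have := H h h0 h1; rewrite big_ord_recr /=.
set S := \sum_(_ < n) _ => HH.
have -> : F h - S = (F h - (S + h ^+ n *: c n)) + h ^+ n *: c n.
  by rewrite opprD addrA subrK.
apply: le_trans (nmD _ _) _; rewrite nmZ ncX.
have p0 : 0 <= nc h ^+ n by apply: exprn_ge0; exact: nc_ge0.
have q0 := nc_ge0 h.
have hK : K * nc h ^+ n.+1 <= `|K| * nc h ^+ n.
  rewrite exprSr mulrA; have := ler_norm K; have := ler_normr K K.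
  rewrite lexx /= => _ hk.
  have : K * nc h ^+ n <= `|K| * nc h ^+ n by apply: ler_wpM2r.
  have : 0 <= `|K| * nc h ^+ n by apply: mulr_ge0.
  nra.
have c0 := nm_ge0 (c n).
nra.
Qed.

Lemma approx_trunc_le {V : normedModType C} (F : C -> V) c m n :
  (m <= n)%N -> approx F c n -> approx F c m.
Proof.
move=> /subnK <-; elim: (n - m)%N => [|k IH] //= h.
by apply: IH; apply: approx_trunc; exact: h.
Qed.

Lemma approx_uniq {V : normedModType C} {F : C -> V} {c n} : approx F c n ->
  (exists d0 : R, 0 < d0 /\ forall h, 0 < nc h -> nc h < d0 -> F h = 0) ->
  forall l, (l < n)%N -> c l = 0.
Proof.
move=> hA [d0 [d00 HF]] l; elim/ltn_ind: l => l IH ln.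
have [d [K [dp H]]] := @approx_trunc_le _ F c l.+1 n ln hA.
apply: nm_eq0; apply: (@zero_lemma _ K (Order.min d d0)).
- by rewrite lt_min dp d00.
- exact: nm_ge0.
move=> r r0; rewrite lt_min => /andP[r1 r2].
have ncr : nc r%:C = r by rewrite ncR ger0_norm // ltW.
have := H r%:C; rewrite ncr => /(_ r0 r1).
rewrite HF ?ncr // big_ord_recr /= big1 ?add0r; last first.
  by move=> i _; rewrite IH ?scaler0 // (ltn_trans (ltn_ord i) ln).
rewrite ?sub0r nmN nmZ ncX ncr exprSr => h.
have rp : 0 < r ^+ l by apply: exprn_gt0.
rewrite -(ler_pM2l rp).
have -> : r ^+ l * (K * r) = K * (r ^+ l * r) by ring.
exact: h.
Qed.

Lemma sub_mid {V : zmodType} (a x g : V) : (a + x - g) - (a - g) = x.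
Proof. by rewrite opprB addrA subrK addrC addKr. Qed.
Lemma sub_mid2 {V : zmodType} (a b g : V) : -(a + b - g) + b = g - a.
Proof. by rewrite opprB opprD addrA addrNK. Qed.

Lemma term_le_sum (N : nat) (F : nat -> R) l : (forall i, 0 <= F i) -> (l < N)%N ->
  F l <= \sum_(i < N) F i.
Proof.
move=> F0 lN; rewrite (bigD1 (Ordinal lN)) //= -[X in X <= _]addr0.
by apply: lerD => //; apply: sumr_ge0.
Qed.

Lemma tail_approx {V : normedModType C} {t : nat -> V} {G : C -> V} {eps : R} :
  0 < eps ->
  (forall h, 0 < nc h -> nc h < eps -> forall e, 0 < e -> exists N, forall m, (N <= m)%N ->
     nm (\sum_(l < m) h ^+ l *: t l - G h) <= e) ->
  forall k, approx G t k.
Proof.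
move=> e0 HG k.
pose r := eps / 2.
have r0 : 0 < r by rewrite /r; lra.
have ncr : nc r%:C = r by rewrite ncR ger0_norm // ltW.
have [N0 HN0] : exists N0, forall m, (N0 <= m)%N ->
    nm (\sum_(l < m) r%:C ^+ l *: t l - G r%:C) <= 1.
  apply: HG; rewrite ?ncr //; rewrite /r; lra.
pose M := 2 + \sum_(l < N0) r ^+ l * nm (t l).
have HM : forall l, r ^+ l * nm (t l) <= M.
  move=> l; case: (ltnP l N0) => hl.
    have := @term_le_sum N0 (fun i => r ^+ i * nm (t i)) l.
    have Hs : 0 <= \sum_(l < N0) r ^+ l * nm (t l).
      by apply: sumr_ge0 => i _; apply: mulr_ge0; [apply: exprn_ge0; lra | apply: nm_ge0].
    move=> /(_ _ hl) H.
    have H' := H (fun i => mulr_ge0 (exprn_ge0 i (ltW r0)) (nm_ge0 (t i))).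
    rewrite /M; lra.
  have H1 := HN0 l hl; have H2 := HN0 l.+1 (leqW hl).
  rewrite big_ord_recr /= in H2.
  have -> : r ^+ l * nm (t l) = nm (r%:C ^+ l *: t l) by rewrite nmZ ncX ncr.
  have -> : r%:C ^+ l *: t l =
    (\sum_(i < l) r%:C ^+ i *: t i + r%:C ^+ l *: t l - G r%:C) -
    (\sum_(i < l) r%:C ^+ i *: t i - G r%:C).
    by rewrite sub_mid.
  apply: le_trans (nmD _ _) _; rewrite nmN.
  have : 0 <= \sum_(l < N0) r ^+ l * nm (t l).
    by apply: sumr_ge0 => i _; apply: mulr_ge0; [apply: exprn_ge0; lra | apply: nm_ge0].
  rewrite /M; lra.
have M0 : 0 <= M by apply: le_trans (HM 0%N); apply: mulr_ge0; [apply: exprn_ge0; lra | apply: nm_ge0].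
exists (r / 2), (2 * M / r ^+ k); split; first lra.
move=> h h0 h1.
apply: le_eps => e ep.
have [N HN] := HG h h0 ltac:(rewrite /r in h1; lra) e ep.
have := HN (k + N)%N (leq_addl _ _).
rewrite big_split_ord /= => HkN.
pose q := nc h / r.
have q0 : 0 <= q by rewrite /q; apply: divr_ge0; [exact: nc_ge0 | lra].
have q1 : q <= 1 / 2.
  rewrite /q ler_pdivrMr //; rewrite /r in h1 *; lra.
set Sk := \sum_(l < k) _ in HkN *.
set Rest := \sum_(i < N) _ in HkN.
have HR : nm Rest <= 2 * M * q ^+ k.
  apply: le_trans (nm_sum _ _ _ _) _.
  apply: (@le_trans _ _ (\sum_(i < N) M * q ^+ k * q ^+ i)).
    apply: ler_sum => i _; rewrite nmZ ncX.
    have -> : nc h = q * r by rewrite /q divfK //; apply: lt0r_neq0.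
    rewrite exprMn -mulrA.
    apply: (@le_trans _ _ (q ^+ (k + i) * M)).
      by rewrite -(mulrA (q ^+ (k + i))); apply: ler_wpM2l; [apply: exprn_ge0 | apply: HM].
    by rewrite exprD le_eqVlt; apply/orP; left; apply/eqP; ring.
  rewrite -mulr_sumr.
  have Mq : 0 <= M * q ^+ k by apply: mulr_ge0 => //; apply: exprn_ge0.
  apply: le_trans (ler_wpM2l Mq (geom_le2 q N q0 q1)) _.
  by rewrite le_eqVlt; apply/orP; left; apply/eqP; ring.
have -> : G h - Sk = - (Sk + Rest - G h) + Rest by rewrite sub_mid2.
apply: le_trans (nmD _ _) _; rewrite nmN.
have -> : 2 * M / r ^+ k * nc h ^+ k = 2 * M * q ^+ k.
  have E : q ^+ k = nc h ^+ k / r ^+ k by exact: expr_div_n.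
  by rewrite E mulrAC -mulrA.
lra.
Qed.

Lemma bounded_opp {V : normedModType C} : bounded_op (fun v : V => - v).
Proof.
apply: nm_bnd; first by move=> a u v; rewrite opprD scalerN.
by exists 1 => u; rewrite nmN mul1r.
Qed.

Lemma approx_sub {V : normedModType C} {F G : C -> V} {c d n} :
  approx F c n -> approx G d n -> approx (fun h => F h - G h) (fun l => c l - d l) n.
Proof.
move=> hF hG; exact: (approx_add hF (approx_lin bounded_opp hG)).
Qed.

Lemma approx_coef {V : normedModType C} {F G : C -> V} {c d n} :
  approx F c n -> approx G d n ->
  (exists d0 : R, 0 < d0 /\ forall h, 0 < nc h -> nc h < d0 -> F h = G h) ->
  forall l, (l < n)%N -> c l = d l.
Proof.
move=> hF hG [d0 [d00 H]] l ln; apply/eqP; rewrite -subr_eq0; apply/eqP.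
apply: (approx_uniq (approx_sub hF hG)) => //.
by exists d0; split => // h h0 h1; rewrite H // subrr.
Qed.

Lemma op_pt {U V : normedModType C} {u : nat -> U -> V} {L : U -> V} :
  op_cvg u L -> forall v e, 0 < e -> exists N, forall m, (N <= m)%N ->
    nm (u m v - L v) <= e.
Proof.
move=> H v e e0.
have p0 : 0 < e / (nm v + 1) by apply: divr_gt0 => //; have := nm_ge0 v; lra.
have [N HN] := H (e / (nm v + 1))%:C ltac:(by rewrite ltcR).
exists N => m hm; have := leC_Re (HN m hm v).
rewrite [`|v|]nmE -rmorphM /= => h; apply: le_trans h _.
rewrite mulrAC ler_pdivrMr; last by have := nm_ge0 v; lra.
have := nm_ge0 v; nra.
Qed.

Lemma lim_pt_unique {V : normedModType C} (u : nat -> V) a b N0 :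
  (forall e, 0 < e -> exists N, forall m, (N <= m)%N -> nm (u m - a) <= e) ->
  (forall m, (N0 <= m)%N -> u m = b) -> a = b.
Proof.
move=> H Hb; apply/eqP; rewrite -subr_eq0; apply/eqP; apply: nm_eq0.
apply/eqP; rewrite eq_le nm_ge0 andbT; apply: le_eps => e e0.
have [N HN] := H e e0; have := HN (N + N0)%N (leq_addr _ _).
by rewrite Hb ?leq_addl // nmB add0r.
Qed.

Lemma ltc0R (k : R) : ((0 : C) < k%:C) = (0 < k).
Proof. exact: (ltcR 0 k). Qed.

Lemma nc_neq0 {h : C} : 0 < nc h -> h != 0.
Proof. by move=> h0; apply/eqP => E; move: h0; rewrite E /nc normr0 /= ltxx. Qed.

Lemma lmod_id1 {V : lmodType C} (a b : C) (u v : V) :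
  a *: u + a *: v + b *: (a *: v) = a *: (u + (1 + b) *: v).
Proof. by rewrite scalerDr !scalerA mulrDr mulr1 scalerDl addrA [b * a]mulrC. Qed.

Section Main.
Context {X Y : normedModType C} (A0 A1 : X -> Y) (RA : C -> Y -> X) (T : int -> Y -> X)
  (eps theta : R).
Context (bA0 : bounded_op A0) (bA1 : bounded_op A1) (eps0 : 0 < eps)
  (hRA : forall z, VW eps theta z -> bounded_op (RA z) /\
     (forall u, RA z (A0 u + z *: A1 u) = u) /\
     (forall y, A0 (RA z y) + z *: A1 (RA z y) = y))
  (bT : forall j, bounded_op (T j)) (hL : laurent_at1 T RA eps)
  (hpole : forall k : nat, (3 <= k)%N -> forall y, T (- k%:Z)%R y = 0).

Lemma VW1 {h} : 0 < nc h -> nc h < eps -> VW eps theta (1 + h).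
Proof.
move=> h0 h1; left; split.
  apply: le_lt_trans (ler_normD _ _) _.
  rewrite normr1 ncE rmorphD rmorph1 ltrD2l ltcR //.
apply/eqP => E; have : h = 0 by apply: (addrI 1); rewrite addr0 E.
by move/eqP; apply/negP; apply: nc_neq0.
Qed.

Lemma VW0 : VW eps theta 0.
Proof.
left; split; last by rewrite eq_sym oner_eq0.
by rewrite normr0 ltc0R addr_gt0 // ltr01.
Qed.

Definition sgp y h := \sum_(k < 2) (h ^+ k.+1)^-1 *: T (- (k.+1)%:Z)%R y.
Definition Gf y h := RA (1 + h) y - sgp y h.

Lemma G_conv y h : 0 < nc h -> nc h < eps -> forall e, 0 < e -> exists N, forall m,
  (N <= m)%N -> nm (\sum_(l < m) h ^+ l *: T l%:Z y - Gf y h) <= e.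
Proof.
move=> h0 h1.
have zh : 1 + h - 1 = h by rewrite addrC addKr.
have [Sg [Rg [HS [HR HF]]]] := hL (1 + h)
  ltac:(by rewrite zh ncE ltc0R ltcR h0 h1).
rewrite zh in HS HR.
have ES : Sg y = sgp y h.
  apply: (@lim_pt_unique _ (fun m => \sum_(k < m) h ^- k.+1 *: T (- (k.+1)%:Z)%R y) _ _ 2).
    by move=> e e0; have [N HN] := op_pt HS y e e0; exists N => m hm; exact: HN.
  move=> m hm; rewrite -(subnK hm) addnC big_split_ord /= [X in _ + X]big1 ?addr0 //.
  move=> i _; rewrite hpole ?scaler0 //.
have EG : Gf y h = Rg y by rewrite /Gf HF -ES addrC addKr.
rewrite EG; exact: op_pt HR y.
Qed.

Lemma G_approx y : approx (Gf y) (fun l => T l%:Z y) 3.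
Proof. exact: (tail_approx eps0 (G_conv y) 3). Qed.

Definition Sf y h := h ^+ 2 *: RA (1 + h) y.

Lemma sgpE y h : sgp y h = (h ^+ 1)^-1 *: T (- 1%:Z)%R y + (h ^+ 2)^-1 *: T (- 2%:Z)%R y.
Proof. by rewrite /sgp !big_ord_recl big_ord0 addr0. Qed.

Lemma S_approx y : approx (Sf y) (fun l => T (l%:Z - 2)%R y) 5.
Proof.
have B1 := approx_shift (G_approx y).
have B2 := approx_add (approx_const (T (- 1%:Z)%R y) 4) B1.
have B3 := approx_shift B2.
have B4 := approx_add (approx_const (T (- 2%:Z)%R y) 5) B3.
apply: (approx_ext B4).
  exists eps; split => // h h0 h1.
  have hn := nc_neq0 h0.
  rewrite /Sf -(subrK (sgp y h) (RA (1 + h) y)) -/(Gf y h) sgpE.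
  rewrite !scalerDr !scalerA expr1 [h ^+ 2 * (h ^+ 2)^-1]divff ?expf_neq0 //.
  rewrite expr2 mulfK // scale1r -expr2.
  by rewrite addrA addrC; congr (_ + _); exact: addrC.
by case => [|[|[|[|[|l]]]]] //= _; rewrite ?addr0 ?add0r.
Qed.

Lemma right_ids y :
 [/\ A0 (T (-2) y) + A1 (T (-2) y) = 0,
     A0 (T (-1) y) + A1 (T (-1) y) + A1 (T (-2) y) = 0,
     A0 (T 0 y) + A1 (T 0 y) + A1 (T (-1) y) = y,
     A0 (T 1 y) + A1 (T 1 y) + A1 (T 0 y) = 0 &
     A0 (T 2 y) + A1 (T 2 y) + A1 (T 1 y) = 0].
Proof.
have SA := S_approx y.
have B0 := approx_lin bA0 SA; have B1 := approx_lin bA1 SA.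
have B2 := approx_trunc (approx_shift B1).
have B := approx_add (approx_add B0 B1) B2.
have D := approx_shift (approx_shift (approx_const y 3)).
have E := approx_coef B D.
have Heq : exists d0 : R, 0 < d0 /\ forall h, 0 < nc h -> nc h < d0 ->
   A0 (Sf y h) + A1 (Sf y h) + h *: A1 (Sf y h) = h *: (h *: y).
  exists eps; split => // h h0 h1.
  have [bR [_ Hy]] := hRA _ (VW1 h0 h1).
  rewrite /Sf !(linZ bA0.1) !(linZ bA1.1) lmod_id1 Hy scalerA expr2. by [].
have := E Heq 0%N erefl; have := E Heq 1%N erefl; have := E Heq 2%N erefl.
have := E Heq 3%N erefl; have := E Heq 4%N erefl.
rewrite /= ?addr0 => e4 e3 e2 e1 e0.
by split.
Qed.

Lemma left_ids u :
 [/\ T (-2) (A0 u + A1 u) = 0,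
     T (-1) (A0 u + A1 u) + T (-2) (A1 u) = 0,
     T 0 (A0 u + A1 u) + T (-1) (A1 u) = u &
     T 1 (A0 u + A1 u) + T 0 (A1 u) = 0].
Proof.
have B := approx_add (S_approx (A0 u + A1 u)) (approx_trunc (approx_shift (S_approx (A1 u)))).
have D := approx_shift (approx_shift (approx_const u 3)).
have E := approx_coef B D.
have Heq : exists d0 : R, 0 < d0 /\ forall h, 0 < nc h -> nc h < d0 ->
   Sf (A0 u + A1 u) h + h *: Sf (A1 u) h = h *: (h *: u).
  exists eps; split => // h h0 h1.
  have [bR [Hu _]] := hRA _ (VW1 h0 h1).
  rewrite /Sf.
  have -> : h *: (h ^+ 2 *: RA (1 + h) (A1 u)) = h ^+ 2 *: (h *: RA (1 + h) (A1 u)) by rewrite !scalerA mulrC.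
  rewrite -scalerDr.
  rewrite -(linZ bR.1) -(linD bR.1) -addrA -{1}[A1 u]scale1r -scalerDl.
  by rewrite Hu scalerA expr2.
have := E Heq 0%N erefl; have := E Heq 1%N erefl; have := E Heq 2%N erefl.
have := E Heq 3%N erefl.
rewrite /= ?addr0 => e3 e2 e1 e0.
by split.
Qed.

Local Notation C0 u := (A0 u + A1 u).
Local Notation lT j := (bT j).1.
Local Notation lA0 := bA0.1.
Local Notation lA1 := bA1.1.

Lemma R0_props : bounded_op (RA 0) /\ (forall u, RA 0 (A0 u) = u) /\
  (forall y, A0 (RA 0 y) = y).
Proof.
have [b [h1 h2]] := hRA _ VW0; split => //; split => [u|y].
  by have := h1 u; rewrite scale0r addr0.
by have := h2 y; rewrite scale0r addr0.
Qed.

Lemma subr_eq0' {V : zmodType} {a b : V} : a + b = 0 -> a = - b.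
Proof. by move/eqP; rewrite addr_eq0 => /eqP. Qed.

Lemma F4 v : T (-1) (A1 (T 0 v)) = 0.
Proof.
have [_ _ _ _ r2] := right_ids v.
have [l2 _ _ _] := left_ids (T 2 v).
have e1 : T (-2) (A1 (T 1 v)) = 0.
  by have := congr1 (T (-2)) r2; rewrite (linD (lT _)) l2 add0r (lin0 (lT _)).
have [_ _ _ r1 _] := right_ids v.
have [_ lm1 _ _] := left_ids (T 1 v).
rewrite e1 addr0 in lm1.
by have := congr1 (T (-1)) r1; rewrite (linD (lT _)) lm1 add0r (lin0 (lT _)).
Qed.

Lemma F5 v : T (-1) (C0 (T 0 v)) = 0.
Proof.
have [_ lm1 _ _] := left_ids (T 0 v).
have [_ _ _ r1 _] := right_ids v.
have [l2 _ _ _] := left_ids (T 1 v).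
have e : T (-2) (A1 (T 0 v)) = 0.
  by have := congr1 (T (-2)) r1; rewrite (linD (lT _)) l2 add0r (lin0 (lT _)).
by rewrite e addr0 in lm1.
Qed.

Lemma F6 v : T 0 (C0 (T (-1) v)) = 0.
Proof.
have [r0 rm1 _ _ _] := right_ids v.
have [_ _ _ l1] := left_ids (T (-2) v).
rewrite r0 (lin0 (lT _)) add0r in l1.
by have := congr1 (T 0) rm1; rewrite (linD (lT _)) l1 addr0 (lin0 (lT _)).
Qed.

Lemma F2 v : T 0 (C0 (T 0 v)) = T 0 v.
Proof. by have [_ _ l0 _] := left_ids (T 0 v); rewrite F4 addr0 in l0. Qed.

Lemma F3 v : T 0 (A1 (T (-1) v)) = 0.
Proof.
have [_ _ r0 _ _] := right_ids v.
have e := congr1 (T 0) r0; rewrite (linD (lT _)) in e.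
by apply: (addrI (T 0 (C0 (T 0 v)))); rewrite e F2 addr0.
Qed.

Lemma F1 v : T (-1) (A1 (T (-1) v)) = T (-1) v.
Proof.
have [_ _ r0 _ _] := right_ids v.
by have := congr1 (T (-1)) r0; rewrite (linD (lT _)) F5 add0r.
Qed.

Lemma F8 u : A1 (T (-1) (A0 u)) = A0 (T (-1) (A1 u)).
Proof.
have [_ rm1 _ _ _] := right_ids (A1 u).
have [_ lm1 _ _] := left_ids u.
have e1 := subr_eq0' rm1.
have e2 := subr_eq0' (etrans (esym (linD lA1 _ _)) (etrans (congr1 A1 lm1) (lin0 lA1))).
rewrite -e2 in e1.
have := e1; rewrite !(linD (lT _)) !(linD lA1).
by move/addIr/esym.
Qed.

Lemma F9 w : T (-1) (A1 (RA 0 w)) = RA 0 (A1 (T (-1) w)).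
Proof.
have [_ [R0A A0R]] := R0_props.
by rewrite -{2}(A0R w) F8 R0A.
Qed.

Lemma F6' v : T 0 (A0 (T (-1) v)) = 0.
Proof. by have := F6 v; rewrite (linD (lT _)) F3 addr0. Qed.

Lemma F10 u : A1 (T 0 (A0 u)) = A0 (T 0 (A1 u)).
Proof.
have [_ _ r0 _ _] := right_ids (A1 u).
have [_ _ l0 _] := left_ids u.
have e := congr1 A1 l0; rewrite (linD lA1) in e.
move/addIr: (etrans r0 (esym e)).
by rewrite !(linD (lT _)) !(linD lA1) => /addIr.
Qed.

Lemma zmod_id1 {V : zmodType} (a b c : V) : a + b + c - b = c + a.
Proof. by rewrite addrAC addrK addrC. Qed.

Definition Bf (u : X) := u - T 0 (A1 u).
Definition Nf (w : X) := T (-1) (A1 w) + RA 0 (C0 (T 0 (C0 w))).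

Lemma FB x : Bf x = T (-1) (A1 x) + T 0 (A0 x).
Proof.
have [_ _ l0 _] := left_ids x.
by rewrite /Bf -{1}l0 (linD (lT _)) zmod_id1.
Qed.

Lemma C0D x y : C0 (x + y) = C0 x + C0 y.
Proof. by rewrite (linD lA0) (linD lA1) addrACA. Qed.

Lemma BN w : Bf (Nf w) = w.
Proof.
have [_ [R0A A0R]] := R0_props.
rewrite FB /Nf (linD lA1) (linD (lT _)) F1 F9 F5 (lin0 lA1).
have [bR0 _] := R0_props.
rewrite (lin0 bR0.1) addr0 (linD lA0) A0R (linD (lT _)) F6' F2 add0r.
by have [_ _ l0 _] := left_ids w; rewrite addrC.
Qed.

Lemma NB u : Nf (Bf u) = u.
Proof.
have [bR0 [R0A A0R]] := R0_props.
rewrite FB /Nf [X in T (-1) X](linD lA1) (linD (lT _)) F1 F4 addr0.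
rewrite C0D (linD (lT _)) F6 add0r F2.
have -> : C0 (T 0 (A0 u)) = A0 (T 0 (C0 u)) by rewrite F10 (linD (lT _)) (linD lA0).
by rewrite R0A; have [_ _ l0 _] := left_ids u; rewrite addrC.
Qed.

Lemma Nf_bounded : bounded_op Nf.
Proof.
have [bR0 _] := R0_props.
have bC0 : bounded_op (fun u => C0 u) := bounded_add bA0 bA1.
have b1 := bounded_comp (bT (-1)) bA1.
have b2 := bounded_comp bR0 (bounded_comp bC0 (bounded_comp (bT 0) bC0)).
exact: (bounded_add b1 b2).
Qed.

Definition Binv := op_inv Bf.

Lemma BinvE w : Binv w = Nf w.
Proof.
have H : exists g : X -> X, bounded_op g /\ cancel Bf g /\ cancel g Bf.
  by exists Nf; split; [exact: Nf_bounded | split; [exact: NB | exact: BN]].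
rewrite /Binv /op_inv; case: pselect => [H'|nH]; last by exfalso; apply: nH.
case: (cid H') => g [_ [c1 c2]] /=.
by rewrite -{1}(BN w) c1.
Qed.

Definition Kf (u : X) := T 0 (A1 u).

Lemma VopE s y : Vop T A1 s y = (-1) ^+ s *: iter s.+1 Binv (iter s Kf (T 0 y)).
Proof. by []. Qed.

Lemma BinvB w : Bf (Binv w) = w.
Proof. by rewrite BinvE BN. Qed.
Lemma BinvB' w : Binv (Bf w) = w.
Proof. by rewrite BinvE NB. Qed.

Lemma BK x : Bf (Kf x) = Kf (Bf x).
Proof. by rewrite /Bf /Kf (linB lA1) (linB (lT _)). Qed.

Lemma BinvK u : Binv (Kf u) = Kf (Binv u).
Proof. by rewrite -{1}(BinvB u) -BK BinvB'. Qed.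

Lemma iter_comm n x : iter n Binv (Kf x) = Kf (iter n Binv x).
Proof. by elim: n => [|n IH] //=; rewrite IH BinvK. Qed.

Lemma P_Binv w : T (-1) (A1 (Binv w)) = T (-1) (A1 w).
Proof.
by rewrite -{2}(BinvB w) /Bf (linB lA1) (linB (lT _)) F4 subr0.
Qed.

Lemma P_iter n x : T (-1) (A1 (iter n Binv x)) = T (-1) (A1 x).
Proof. by elim: n => [|n IH] //=; rewrite P_Binv IH. Qed.

Lemma P_Kiter s y : T (-1) (A1 (iter s Kf (T 0 y))) = 0.
Proof. by case: s => [|s] /=; rewrite F4. Qed.

Lemma Binv_T0 y : Binv (T 0 y) = RA 0 (C0 (T 0 y)).
Proof. by rewrite BinvE /Nf F4 F2 add0r. Qed.

Lemma V0 y : A0 (Vop T A1 0 y) = C0 (T 0 y).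
Proof.
have [_ [_ A0R]] := R0_props.
by rewrite VopE expr0 scale1r /= Binv_T0 A0R.
Qed.

Lemma VS s y : A0 (Vop T A1 s.+1 y) + A1 (Vop T A1 s y) = 0.
Proof.
have [_ [_ A0R]] := R0_props.
set u := iter s.+1 Binv (iter s Kf (T 0 y)).
have E1 : iter s.+2 Binv (iter s.+1 Kf (T 0 y)) = Binv (Kf u).
  by rewrite /u /= iter_comm BinvK.
have E2 : A0 (Binv (Kf u)) = A1 u.
  rewrite /Kf Binv_T0 A0R.
  have [_ _ r0 _ _] := right_ids (A1 u).
  have : T (-1) (A1 u) = 0 by rewrite /u P_iter P_Kiter.
  move=> e; rewrite e (lin0 lA1) addr0 in r0; exact: r0.
rewrite !VopE E1 (linZ lA0) (linZ lA1) E2 -/u.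
by rewrite exprS mulN1r scaleNr addNr.
Qed.

Lemma zmod_regroup {V : zmodType} (a1 a2 a3 a4 b1 b2 b3 b4 : V) :
  (a1 - a2 + a3 + a4) + (b1 - b2 + b3 + b4) = (a1 + b1) - (a2 + b2) + (a3 + b3) + (a4 + b4).
Proof.
by rewrite [LHS]addrACA; congr (_ + _); rewrite [LHS]addrACA; congr (_ + _);
  rewrite [LHS]addrACA opprD.
Qed.

Lemma zmod_cancel3 {V : zmodType} (a b c : V) : a + c = 0 -> a + b + c = b.
Proof. by move=> h; rewrite addrAC h add0r. Qed.

Lemma zmod_fin {V : zmodType} (p q r c : V) : (p + q) - (p + (q - r)) + 0 + c = c + r.
Proof. by rewrite addr0 opprD opprB addrACA subrr add0r [q + _]addrC subrK addrC. Qed.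

Definition Yf (n2 n1 : Y) (w : X) (d : Y) := T (-2) n2 - T (-1) n1 + T (-2) d + w.

Lemma step n2 n1 w n2' n1' w' g d : n2' = n2 + n1' -> n1' = n1 + g ->
  A0 w' + A1 w = C0 (T 0 g) -> A0 (Yf n2' n1' w' d) + A1 (Yf n2 n1 w d) = g.
Proof.
move=> e2 e1 ew.
have en1 : n1 = n1' - g by rewrite e1 addrK.
rewrite /Yf !(linD lA0) !(linN lA0) !(linD lA1) !(linN lA1) zmod_regroup ew.
have [r2 _ _ _ _] := right_ids d.
rewrite r2.
rewrite e2 (linD (lT _)) (linD lA0) (@zmod_cancel3 _ (A0 (T (-2) n2))); last by have [r _ _ _ _] := right_ids n2.
rewrite en1 (linB (lT _)) (linB lA1).
have [r2' rm1 _ _ _] := right_ids n1'.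
have -> : A0 (T (-2) n1') = A0 (T (-1) n1') + A1 (T (-1) n1').
  rewrite (subr_eq0' r2'); have := subr_eq0' rm1 => ->; by [].
rewrite zmod_fin.
by have [_ _ r0 _ _] := right_ids g.
Qed.

Lemma intS1 t : (t.+1%:Z - 1 = t%:Z)%R.
Proof. by rewrite intS addrC addKr. Qed.

Lemma intSS t s : (t.+1%:Z - s.+1%:Z = t%:Z - s%:Z)%R.
Proof. by rewrite !intS opprD addrACA subrr add0r. Qed.

Section Series.
Context (g : int -> Y).
Definition N1s t := \sum_(s < t.+1) g (t%:Z - s%:Z)%R.
Definition Ws t := \sum_(s < t.+1) Vop T A1 s (g (t%:Z - s%:Z)%R).

Lemma nabla1E t : nabla_inv 1 g t = N1s t.
Proof. by apply: eq_bigr => s _; rewrite addnK binn scale1r. Qed.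

Lemma nabla2E t : nabla_inv 2 g t = \sum_(s < t.+1) (s.+1)%:R *: g (t%:Z - s%:Z)%R.
Proof. by apply: eq_bigr => s _; rewrite addn2 subn1 /= binSn. Qed.

Lemma N1S t : N1s t.+1 = N1s t + g t.+1%:Z.
Proof.
rewrite /N1s big_ord_recl /= subr0 addrC; congr (_ + _).
by apply: eq_bigr => i _; rewrite /bump /= add1n intSS.
Qed.

Lemma N2S t : nabla_inv 2 g t.+1 = nabla_inv 2 g t + N1s t.+1.
Proof.
rewrite !nabla2E big_ord_recl /= subr0 scale1r N1S.
have -> : \sum_(i < t.+1) (bump 0 i).+1%:R *: g (t.+1%:Z - (bump 0 i)%:Z)%R =
  \sum_(i < t.+1) (i.+1%:R *: g (t%:Z - i%:Z)%R) + N1s t.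
  rewrite /N1s -big_split /=; apply: eq_bigr => i _.
  by rewrite /bump /= add1n intSS mulrSr scalerDl scale1r.
by rewrite addrC -addrA.
Qed.

Lemma WS t : A0 (Ws t.+1) + A1 (Ws t) = C0 (T 0 (g t.+1%:Z)).
Proof.
rewrite /Ws big_ord_recl /= subr0 (linD lA0) V0 !(lin_sum lA0) !(lin_sum lA1).
rewrite -addrA -big_split /= big1 ?addr0 // => i _.
by rewrite /bump /= add1n intSS VS.
Qed.

Lemma W0 : A0 (Ws 0) + A1 0 = C0 (T 0 (g 0%:Z)).
Proof. by rewrite /Ws big_ord1 subr0 V0 (lin0 lA1) addr0. Qed.
End Series.

Lemma main_pkg (d : Y) (g : int -> Y) (x : int -> X) :
  x (-1) = T (-2) d ->
  (forall t : nat, A0 (x t%:Z) + A1 (x (t%:Z - 1)) = g t%:Z) ->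
  forall t : nat, x t%:Z = T (-2) (nabla_inv 2 g t) - T (-1) (nabla_inv 1 g t)
     + T (-2) d + t.+1%:R *: T (-2) (A0 (T (-2) d) + A1 (T (-2) d))
     + \sum_(s < t.+1) Vop T A1 s (g (t%:Z - s%:Z)).
Proof.
move=> xm1 hx.
have [_ [R0A _]] := R0_props.
suff H : forall t : nat, x t%:Z = Yf (nabla_inv 2 g t) (N1s g t) (Ws g t) d.
  move=> t; rewrite H nabla1E; have [r2 _ _ _ _] := right_ids d.
  by rewrite r2 (lin0 (lT _)) scaler0 addr0.
elim => [|t IH].
  have h0 := hx 0%N; have e01 : (0%:Z - 1 = -1 :> int)%R by []. rewrite e01 xm1 in h0.
  have e : Yf 0 0 0 d = T (-2) d.
    by rewrite /Yf !(lin0 (lT _)) subrr add0r addr0.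
  have hs := @step 0 0 0 (nabla_inv 2 g 0) (N1s g 0) (Ws g 0) (g 0%:Z) d.
  rewrite e in hs.
  have := hs ltac:(by rewrite add0r /nabla_inv /N1s !big_ord1 bin0 scale1r)
    ltac:(by rewrite add0r /N1s big_ord1 subr0) (W0 g).
  rewrite -{1}h0 => /addIr E.
  by rewrite -(R0A (x _)) -E R0A.
have ht := hx t.+1; rewrite intS1 IH in ht.
have hs := step _ _ _ _ _ _ _ d (N2S g t) (N1S g t) (WS g t).
rewrite -{1}ht in hs; move/addIr: hs => E.
by rewrite -(R0A (x _)) -E R0A.
Qed.

Lemma range_pkg y : T (-2) y = T (-1) (A1 (T (-2) y)).
Proof.
have [_ _ l0 _] := left_ids (T (-2) y).
have [r2 _ _ _ _] := right_ids y.
by rewrite r2 (lin0 (lT _)) add0r in l0.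
Qed.

End Main.
End NM.

Theorem mainTheorem7 (R : realType) (X Y : completeNormedModType R[i])
  (A0 A1 : X -> Y) (RA : R[i] -> Y -> X) (T : int -> Y -> X) (eps theta : R)
  (dOm : measure_display) (Omega : measurableType dOm) (P : probability Omega R)
  (n : int -> Omega -> X) (F0 F1 : X -> Y) (x : int -> Omega -> X) (d : Y) :
  bounded_op A0 -> bounded_op A1 -> bounded_op F0 -> bounded_op F1 ->
  0 < eps -> 0 < theta ->
  (* R(z) = A(z)^{-1} in B(Y,X) for z in V_eps \cup W_theta *)
  (forall z, VW eps theta z ->
     bounded_op (RA z) /\
     (forall u, RA z (A0 u + z *: A1 u) = u) /\
     (forall y, A0 (RA z y) + z *: A1 (RA z y) = y)) ->
  analytic_on (VW eps theta) RA ->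
  (* Laurent coefficients T_j of R about z = 1 *)
  (forall j, bounded_op (T j)) -> laurent_at1 T RA eps ->
  (* pole of order 2 *)
  (exists y, T (-2)%R y != 0) ->
  (forall k : nat, (3 <= k)%N -> forall y, T (- k%:Z)%R y = 0) ->
  (* time series setup *)
  (forall t, bochner_measurable (n t)) ->
  (forall t, finite_second_moment P (n t)) ->
  (forall t, bochner_integral_is P (n t) 0) ->
  iid_seq P n ->
  (forall w, x (-1)%R w = T (-2)%R d) ->
  (forall (t : nat) w, A0 (x t%:Z w) + A1 (x (t%:Z - 1)%R w) = gseq F0 F1 n t%:Z w) ->
  (forall (t : nat) w,
     x t%:Z w =
       T (-2)%R (nabla_inv 2 (fun s => gseq F0 F1 n s w) t)
       - T (-1)%R (nabla_inv 1 (fun s => gseq F0 F1 n s w) t)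
       + T (-2)%R d
       + t.+1%:R *: T (-2)%R (A0 (T (-2)%R d) + A1 (T (-2)%R d))
       + \sum_(s < t.+1) Vop T A1 s (gseq F0 F1 n (t%:Z - s%:Z) w)) /\
  range (T (-2)%R) `<=` range (T (-1)%R) /\
  (forall f : X -> R[i]^o, bounded_op f -> (forall y, f (T (-2)%R y) = 0) ->
     forall (t : nat) w,
       f (x t%:Z w) =
         - f (T (-1)%R (\sum_(s < t.+1) gseq F0 F1 n (t%:Z - s%:Z) w))
         + \sum_(s < t.+1) f (Vop T A1 s (gseq F0 F1 n (t%:Z - s%:Z) w))).
Proof.
move=> bA0 bA1 bF0 bF1 eps0 th0 hRA _ bT hL _ hpole _ _ _ _ hxm1 hx.
have MP := fun w => main_pkg A0 A1 RA T eps theta bA0 bA1 eps0 hRA bT hL hpole d (fun s => gseq F0 F1 n s w) (fun s => x s w) (hxm1 w) (fun t => hx t w).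
split; first by move=> t w; exact: (MP w t).
split.
  move=> u [y _ <-]; exists (A1 (T (-2)%R y)) => //.
  by rewrite -(range_pkg A0 A1 RA T eps theta bA0 bA1 eps0 hRA bT hL hpole).
move=> f bf hf t w; rewrite (MP w t).
have hn1 : nabla_inv 1 (fun s => gseq F0 F1 n s w) t =
    \sum_(s < t.+1) gseq F0 F1 n (t%:Z - s%:Z)%R w.
  by apply: eq_bigr => s _; rewrite addnK binn scale1r.
rewrite hn1 !(linD bf.1) !(linN bf.1) (linZ bf.1) (lin_sum bf.1) !hf.
by rewrite scaler0 ?oppr0 ?add0r ?addr0.
Qed.
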